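(* Let $\mathcal J_1,\dots,\mathcal J_l\subseteq S=K[V]$ be homogeneous prime ideals defining irreducible projective varieties. The following are equivalent: (1) the sequence $\mathcal J_1,\dots,\mathcal J_l$ is linearly joined; (2) for all $i=1,\dots,l$ there exist linear subspaces $\mathcal Q_i\subseteq V$ and ideals $\mathcal M_i\subseteq S$ such that (a) $\mathcal J_i=(\mathcal M_i,\mathcal Q_i)$ for all $i$; (b) the sequence of ideals $(\mathcal Q_1),\dots,(\mathcal Q_l)$ is linearly joined; (c) $\mathcal M_i\subseteq(\mathcal Q_j)$ for all $i\neq j$, $i,j\in\{1,\dots,l\}$.
   Context: $K$ is a field, $V$ a $K$-vector space of dimension $r+1$, $S=K[V]$ the polynomial ring with standard grading, $\mathbb P^r$ the associated projective space. For $Q\subseteq V$, $(Q)$ is the ideal of $S$ generated by $Q$; $(\mathcal M,\mathcal Q)$ is the ideal generated by the ideal $\mathcal M$ and the subspace $\mathcal Q$. For a projective variety $\mathcal V$, $\mathrm{span}(\mathcal V)$ is the smallest linear subspace containing it. An ordered sequence $\mathcal V_1,\dots,\mathcal V_l$ of irreducible projective subvarieties of $\mathbb P^r$ is linearly joined if for every $i=1,\dots,l-1$, $\mathcal V_{i+1}\cap(\mathcal V_1\cup\dots\cup\mathcal V_i)=\mathrm{span}(\mathcal V_{i+1})\cap\mathrm{span}(\mathcal V_1\cup\dots\cup\mathcal V_i)$; a sequence of homogeneous prime ideals (e.g. ideals generated by linear subspaces of $V$) is called linearly joined if the sequence of varieties they define is. *)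

(* Defs.v *)
From mathcomp Require Import all_boot all_order all_algebra.
From mathcomp Require Import mpoly.

Set Implicit Arguments.
Unset Strict Implicit.
Unset Printing Implicit Defensive.

Import GRing.Theory.
Local Open Scope ring_scope.

(* S = K[V] with dim V = n (= r+1): the polynomial ring {mpoly K[n]},
   V = the space of linear forms (degree-one homogeneous polynomials).
   Subsets of S are Prop-valued predicates. *)

Section Defs.
Variables (K : fieldType) (n : nat).
Local Notation S := {mpoly K[n]}.

Definition subS := S -> Prop.

Definition sub_incl (A B : subS) : Prop := forall p, A p -> B p.
Definition sub_eq (A B : subS) : Prop := forall p, A p <-> B p.

Definition is_ideal (I : subS) : Prop :=
  [/\ I 0, (forall p q, I p -> I q -> I (p + q)) &
      (forall a p, I p -> I (a * p))].

Definition gen_ideal (A : subS) : subS :=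
  fun p => forall I, is_ideal I -> sub_incl A I -> I p.

Definition gen_ideal2 (M Q : subS) : subS :=
  gen_ideal (fun p => M p \/ Q p).

Definition hcomp (d : nat) (p : S) : S :=
  \sum_(m <- msupp p | mdeg m == d) p@_m *: 'X_[m].

Definition is_homogeneous_ideal (I : subS) : Prop :=
  is_ideal I /\ forall p d, I p -> I (hcomp d p).

Definition is_prime_ideal (I : subS) : Prop :=
  [/\ is_ideal I, ~ I 1 & forall p q, I (p * q) -> I p \/ I q].

Definition relevant (I : subS) : Prop := ~ (forall i : 'I_n, I 'X_i).

Definition linear_form (p : S) : Prop :=
  exists c : 'I_n -> K, p = \sum_i c i *: 'X_i.

Definition is_lin_subspace (Q : subS) : Prop :=
  [/\ sub_incl Q linear_form, Q 0,
      (forall p q, Q p -> Q q -> Q (p + q)) &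
      (forall (c : K) p, Q p -> Q (c *: p))].

(* Points of P^r (scheme-theoretically): relevant homogeneous primes.
   A set of points is a predicate on subsets of S. *)
Definition is_point (P : subS) : Prop :=
  [/\ is_homogeneous_ideal P, is_prime_ideal P & relevant P].

Definition ptset := subS -> Prop.

Definition pt_incl (X Y : ptset) : Prop := forall P, is_point P -> X P -> Y P.
Definition pt_eq (X Y : ptset) : Prop :=
  forall P, is_point P -> (X P <-> Y P).
Definition pt_cap (X Y : ptset) : ptset := fun P => X P /\ Y P.

Definition variety (A : subS) : ptset :=
  fun P => is_point P /\ sub_incl A P.

Definition union_var (J : nat -> subS) (i : nat) : ptset :=
  fun P => exists2 k, (k < i)%N & variety (J k) P.

Definition span (X : ptset) : ptset :=
  fun P => is_point P /\
    forall Q, is_lin_subspace Q -> pt_incl X (variety (gen_ideal Q)) ->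
      variety (gen_ideal Q) P.

Definition linearly_joined (J : nat -> subS) (l : nat) : Prop :=
  forall i, (0 < i < l)%N ->
    pt_eq (pt_cap (variety (J i)) (union_var J i))
          (pt_cap (span (variety (J i))) (span (union_var J i))).

End Defs.

(* Main.v *)
Require Import Defs.
From mathcomp Require Import all_boot all_order all_algebra.
From mathcomp Require Import mpoly.
From Stdlib Require Import Classical Lia.
From mathcomp Require Import zify.
Set Implicit Arguments.
Unset Strict Implicit.
Unset Printing Implicit Defensive.
Import GRing.Theory.
Local Open Scope ring_scope.

Lemma gen_ideal_ideal (K : fieldType) n (A : subS K n) : is_ideal (gen_ideal A).
Proof.
split.
- by move=> I [] ? _ _ _.
- by move=> p q Hp Hq I HI HA; case: (HI) => _ Hadd _; apply: Hadd; [apply: Hp|apply: Hq].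
- by move=> a p Hp I HI HA; case: (HI) => _ _ Hmul; apply: Hmul; apply: Hp.
Qed.

Lemma gen_ideal_sub (K : fieldType) n (A : subS K n) : sub_incl A (gen_ideal A).
Proof. by move=> p Ap I _ HA; apply: HA. Qed.

Lemma gen_ideal_min (K : fieldType) n (A I : subS K n) :
  is_ideal I -> sub_incl A I -> sub_incl (gen_ideal A) I.
Proof. by move=> HI HA p Hp; apply: Hp. Qed.

Lemma gen_ideal_mono (K : fieldType) n (A B : subS K n) :
  sub_incl A B -> sub_incl (gen_ideal A) (gen_ideal B).
Proof.
move=> AB; apply: gen_ideal_min; first exact: gen_ideal_ideal.
by move=> p /AB; apply: gen_ideal_sub.
Qed.

Lemma id0 (K : fieldType) n (I : subS K n) : is_ideal I -> I 0.
Proof. by case. Qed.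
Lemma idD (K : fieldType) n (I : subS K n) p q : is_ideal I -> I p -> I q -> I (p + q).
Proof. by case=> _ H _; apply: H. Qed.
Lemma idM (K : fieldType) n (I : subS K n) a p : is_ideal I -> I p -> I (a * p).
Proof. by case=> _ _ H; apply: H. Qed.
Lemma idMr (K : fieldType) n (I : subS K n) a p : is_ideal I -> I p -> I (p * a).
Proof. by move=> HI Hp; rewrite mulrC; apply: idM. Qed.
Lemma idN (K : fieldType) n (I : subS K n) p : is_ideal I -> I p -> I (- p).
Proof. by move=> HI Hp; rewrite -mulN1r; apply: idM. Qed.
Lemma idB (K : fieldType) n (I : subS K n) p q : is_ideal I -> I p -> I q -> I (p - q).
Proof. by move=> HI Hp Hq; apply: idD => //; apply: idN. Qed.
Lemma idZ (K : fieldType) n (I : subS K n) (c : K) p : is_ideal I -> I p -> I (c *: p).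
Proof. by move=> HI Hp; rewrite -mul_mpolyC; apply: idM. Qed.
Lemma id_sum (K : fieldType) n (I : subS K n) (T : Type) (r : seq T) (P : pred T) F :
  is_ideal I -> (forall i, P i -> I (F i)) -> I (\sum_(i <- r | P i) F i).
Proof.
move=> HI HF; apply: (big_ind I); [exact: id0 | by move=> x y; apply: idD | exact: HF].
Qed.

Definition lf (K : fieldType) n (c : 'rV[K]_n) : {mpoly K[n]} := \sum_i c 0 i *: 'X_i.

Lemma lfD (K : fieldType) n (c d : 'rV[K]_n) : lf (c + d) = lf c + lf d.
Proof. by rewrite /lf -big_split /=; apply: eq_bigr => i _; rewrite mxE scalerDl. Qed.
Lemma lfZ (K : fieldType) n (a : K) (c : 'rV[K]_n) : lf (a *: c) = a *: lf c.
Proof. by rewrite /lf scaler_sumr; apply: eq_bigr => i _; rewrite mxE scalerA. Qed.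
Lemma lf0 (K : fieldType) n : lf (0 : 'rV[K]_n) = 0.
Proof. by rewrite /lf big1 // => i _; rewrite mxE scale0r. Qed.
Lemma lfB (K : fieldType) n (c d : 'rV[K]_n) : lf (c - d) = lf c - lf d.
Proof. by rewrite lfD -scaleN1r lfZ scaleN1r. Qed.
Lemma lf_sum (K : fieldType) n (I : Type) (r : seq I) (P : pred I) (F : I -> 'rV[K]_n) :
  lf (\sum_(i <- r | P i) F i) = \sum_(i <- r | P i) lf (F i).
Proof.
by apply: (big_morph (@lf K n)); [move=> x y; apply: lfD | apply: lf0].
Qed.

Lemma linear_formP (K : fieldType) n (p : {mpoly K[n]}) :
  linear_form p -> exists c, p = lf c.
Proof.
case=> f ->; exists (\row_i f i); rewrite /lf; apply: eq_bigr => i _; by rewrite mxE.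
Qed.

Lemma lf_linear_form (K : fieldType) n (c : 'rV[K]_n) : linear_form (lf c).
Proof. by exists (fun i => c 0 i). Qed.

Lemma lf_delta (K : fieldType) n (s : 'I_n) : lf ('e_s : 'rV[K]_n) = 'X_s.
Proof.
rewrite /lf (bigD1 s) //= big1 ?addr0; first by rewrite mxE !eqxx scale1r.
move=> i ne; rewrite mxE; case: eqP => [e|]; last by rewrite scale0r.
by case: eqP => [e2|]; rewrite ?scale0r //; move: ne; rewrite e2 eqxx.
Qed.

Lemma lf_homog (K : fieldType) n (c : 'rV[K]_n) : lf c \is 1.-homog.
Proof.
rewrite /lf; apply: rpred_sum => i _; apply: rpredZ.
rewrite dhomogX; apply/eqP; exact: mdeg1.
Qed.

Lemma ideal_diffM (K : fieldType) n (G : subS K n) a b c d :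
  is_ideal G -> G (a - b) -> G (c - d) -> G (a * c - b * d).
Proof.
move=> HG H1 H2.
have -> : a * c - b * d = a * (c - d) + (a - b) * d by rewrite mulrBr mulrBl addrA subrK.
apply: idD => //; first exact: idM.
exact: (idMr d HG H1).
Qed.

Lemma ideal_diffX (K : fieldType) n (G : subS K n) a b k :
  is_ideal G -> G (a - b) -> G (a ^+ k - b ^+ k).
Proof.
move=> HG H; elim: k => [|k IH]; first by rewrite !expr0 subrr; apply: id0.
by rewrite !exprS; apply: ideal_diffM.
Qed.

Lemma ideal_comp_diff (K : fieldType) n (G : subS K n) (t : n.-tuple {mpoly K[n]}) :
  is_ideal G -> (forall s, G ('X_s - tnth t s)) -> forall p, G (p - (p \mPo t)).
Proof.
move=> HG Ht; elim/mpolyind => [|c m p _ _ IH] /=.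
  by rewrite comp_mpoly0 subr0; apply: id0.
rewrite comp_mpolyD comp_mpolyZ opprD addrACA -scalerBr.
apply: idD => //; apply: idZ => //.
rewrite comp_mpolyX {1}mpolyXE_id.
apply: (big_rec2 (fun a b => G (a - b))).
  by rewrite subrr; apply: id0.
move=> i y1 y2 _ Hy; apply: ideal_diffM => //; exact: ideal_diffX.
Qed.

Lemma comp_homog (K : fieldType) n (t : n.-tuple {mpoly K[n]}) :
  (forall s, tnth t s \is 1.-homog) ->
  forall m, 'X_[m] \mPo t \is (mdeg m).-homog.
Proof.
move=> Ht m; rewrite comp_mpolyX mdegE.
apply: (big_rec2 (fun d (p : {mpoly K[n]}) => p \is d.-homog)); first exact: dhomog1.
move=> i d p _ Hp; apply: dhomogM => //.
have := @dhomogMn n K mdeg 1%N (tnth t i) (m i) (Ht i); by rewrite mul1n.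
Qed.

Lemma pihomog_comp (K : fieldType) n (t : n.-tuple {mpoly K[n]}) :
  (forall s, tnth t s \is 1.-homog) ->
  forall p d, pihomog mdeg d (p \mPo t) = pihomog mdeg d p \mPo t.
Proof.
move=> Ht p d.
elim/mpolyind: p; first by rewrite !linear0.
move=> c m p msupp cn0 ihp; rewrite !linearP /= {}ihp.
congr (c *: _ + _); case: (eqVneq (mdeg m) d) => wgtm.
+ have /eqP := wgtm; rewrite -(dhomogX K) => /pihomog_dE ->.
  by have := comp_homog Ht m; rewrite wgtm => /pihomog_dE ->.
rewrite (pihomog_ne0 wgtm (comp_homog Ht m)).
by rewrite (pihomog_ne0 wgtm) ?linear0 // dhomogX.
Qed.

Lemma lin_sub_mx (K : fieldType) n (U : subS K n) :
  is_lin_subspace U -> exists A : 'M[K]_n, forall c, U (lf c) <-> (c <= A)%MS.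
Proof.
case=> _ U0 UD UZ.
pose Uv (c : 'rV[K]_n) := U (lf c).
have Uv0 : Uv 0 by rewrite /Uv lf0.
have UvD c d : Uv c -> Uv d -> Uv (c + d) by rewrite /Uv lfD; apply: UD.
have UvZ a c : Uv c -> Uv (a *: c) by rewrite /Uv lfZ; apply: UZ.
have UvS (A : 'M[K]_n) : (forall i, Uv (row i A)) -> forall v : 'rV_n, (v <= A)%MS -> Uv v.
  move=> HA v /submxP [u ->]; rewrite mulmx_sum_row.
  by apply: (big_ind Uv) => // i _; apply: UvZ.
suff : forall k (A : 'M[K]_n), (forall v : 'rV_n, (v <= A)%MS -> Uv v) ->
    (n - \rank A <= k)%N -> exists B : 'M[K]_n, forall c, Uv c <-> (c <= B)%MS.
  move=> H; apply: (H n 0); last by rewrite leq_subr.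
  by move=> v; rewrite submx0 => /eqP ->.
elim=> [|k IH] A HA Hk.
- exists A => c; split; last exact: HA.
  move=> Hc; apply: contraT => Hn.
  have : (\rank A < \rank (A + c)%MS)%N.
    apply: rank_ltmx; rewrite ltmxE addsmxSl /=; apply: contra Hn.
    by apply: submx_trans; apply: addsmxSr.
  by have := rank_leq_col (A + c)%MS; move: Hk; lia.
- case: (classic (forall c, Uv c -> (c <= A)%MS)) => [H|].
    by exists A => c; split; [apply: H | apply: HA].
  move=> Hno; have [c Hc] := not_all_ex_not _ _ Hno; have [Uc Hn] := imply_to_and _ _ Hc.
  have Hlt : (\rank A < \rank (A + c)%MS)%N.
    apply: rank_ltmx; rewrite ltmxE addsmxSl /=; apply/negP => H; apply: Hn.
    by apply: submx_trans H; apply: addsmxSr.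
  apply: (IH (A + c)%MS).
    move=> v /sub_addsmxP [[u1 u2] /= ->]; apply: UvD.
      by apply: HA; apply: submxMl.
    by rewrite [u2]mx11_scalar mul_scalar_mx; apply: UvZ.
  by have := rank_leq_col (A + c)%MS; move: Hk; lia.
Qed.

Lemma lin_point (K : fieldType) n (U : subS K n) :
  is_lin_subspace U -> relevant (gen_ideal U) -> is_point (gen_ideal U).
Proof.
move=> HU Hrel; have [A HA] := lin_sub_mx HU.
case: HU => Ulin U0 UD UZ.
pose P := proj_mx (A^C)%MS A.
have cap0 : ((A^C)%MS :&: A)%MS = 0 by rewrite capmxC capmx_compl.
pose t := [tuple lf ('e_s *m P) | s < n].
have lfc c : lf c \mPo t = lf (c *m P).
  rewrite [lf c]/lf raddf_sum /=.
  have -> : c *m P = \sum_i c 0 i *: ('e_i *m P).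
    by rewrite {1}[c]row_sum_delta mulmx_suml; apply: eq_bigr => i _; rewrite scalemxAl.
  rewrite lf_sum; apply: eq_bigr => i _.
  by rewrite comp_mpolyZ comp_mpolyXU -tnth_nth tnth_mktuple lfZ.
have Uker u : U u -> u \mPo t = 0.
  move=> Uu; have [c Ec] := linear_formP (Ulin _ Uu).
  rewrite Ec lfc proj_mx_0 ?lf0 //; apply/HA; by rewrite -Ec.
have Hdiff s : gen_ideal U ('X_s - tnth t s).
  apply: gen_ideal_sub; rewrite tnth_mktuple -lf_delta -lfB; apply/HA.
  apply: proj_mx_compl_sub; apply: submx_full.
  by rewrite addsmxC; apply: addsmx_compl_full.
have GI := gen_ideal_ideal U.
pose Z (p : {mpoly K[n]}) := p \mPo t = 0.
have ZI : is_ideal Z.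
  split; rewrite /Z.
  - exact: comp_mpoly0.
  - by move=> p q Hp Hq; rewrite comp_mpolyD Hp Hq addr0.
  - by move=> a p Hp; rewrite rmorphM /= Hp mulr0.
have GZ p : gen_ideal U p <-> Z p.
  split; first by apply: gen_ideal_min => // u Uu; apply: Uker.
  move=> Hp; have := ideal_comp_diff GI Hdiff p; by rewrite /Z in Hp; rewrite Hp subr0.
have Thom : forall s, tnth t s \is 1.-homog by move=> s; rewrite tnth_mktuple lf_homog.
split => //.
- split => // p d /GZ Hp; apply/GZ.
  change (pihomog mdeg d p \mPo t = 0).
  by rewrite -pihomog_comp // Hp linear0.
- split => //.
  + by move/GZ; rewrite /Z comp_mpoly1; apply/eqP; apply: oner_neq0.
  + move=> p q /GZ; rewrite /Z rmorphM /= => /eqP; rewrite mulf_eq0.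
    by case/orP => /eqP H; [left|right]; apply/GZ.
Qed.

Lemma hom_in_max (K : fieldType) n (J G : subS K n) :
  is_homogeneous_ideal J -> ~ J 1 -> is_ideal G -> (forall i, G 'X_i) ->
  sub_incl J G.
Proof.
move=> [JI Jh] J1 GI GX p Jp.
have p0 : p@_0%MM = 0.
  case: (boolP (0%MM \in msupp p)) => H0; last exact: memN_msupp_eq0.
  have E : hcomp 0 p = p@_0%MM *: 1.
    rewrite /hcomp (eq_bigl (pred1 0%MM)); last by move=> m; rewrite /= mdeg_eq0.
    by rewrite -big_filter filter_pred1_uniq ?msupp_uniq // big_seq1 mpolyX0.
  apply: NNPP => nz; apply: J1.
  have := idZ (p@_0%MM)^-1 JI (Jh p 0%N Jp).
  by rewrite E scalerA mulVf ?scale1r //; apply/eqP.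
rewrite [p]mpolyE; apply: id_sum => // m _.
case: (eqVneq m 0%MM) => [->|nz]; first by rewrite p0 scale0r; apply: id0.
apply: idZ => //.
have [i Hi] : exists i, m i != 0%N.
  apply: NNPP => H; move/eqP: nz; apply; apply/mnmP => i; rewrite mnm0E.
  by apply/eqP; apply: contraT => Hi; case: H; exists i.
rewrite -(submK (m := U_(i)%MM) (m' := m)); last by rewrite lep1mP.
by rewrite mpolyXD; apply: idM.
Qed.

Lemma span_self (K : fieldType) n (X : ptset K n) P : is_point P -> X P -> Defs.span X P.
Proof. by move=> HP HX; split => // Q _ H; apply: H. Qed.

Lemma span_mono (K : fieldType) n (X Y : ptset K n) P :
  pt_incl X Y -> Defs.span X P -> Defs.span Y P.
Proof.
move=> XY [HP H]; split => // Q HQ HY; apply: H => // P' HP' HX.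
by apply: HY => //; apply: XY.
Qed.

Lemma point_ideal (K : fieldType) n (P : subS K n) : is_point P -> is_ideal P.
Proof. by case=> [[]]. Qed.

Lemma dir21 (K : fieldType) n l (J Q M : nat -> subS K n) :
  (forall i, (i < l)%N -> is_lin_subspace (Q i) /\ is_ideal (M i)) ->
  (forall i, (i < l)%N -> sub_eq (J i) (gen_ideal2 (M i) (Q i))) ->
  linearly_joined (fun i => gen_ideal (Q i)) l ->
  (forall i j, (i < l)%N -> (j < l)%N -> i <> j -> sub_incl (M i) (gen_ideal (Q j))) ->
  linearly_joined J l.
Proof.
move=> HQM HJ HLJ HM i Hi P HP.
have il : (i < l)%N by case/andP: Hi.
have JQ k : (k < l)%N -> sub_incl (Q k) (J k).
  by move=> kl q Qq; apply/(HJ k kl); apply: gen_ideal_sub; right.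
have VJQ k : (k < l)%N -> pt_incl (variety (J k)) (variety (gen_ideal (Q k))).
  move=> kl P' _ [pt sub]; split => //.
  by apply: gen_ideal_min; [exact: point_ideal | move=> q /(JQ k kl); apply: sub].
have back a b : (a < l)%N -> (b < l)%N -> a <> b ->
    sub_incl (gen_ideal (Q a)) P -> sub_incl (gen_ideal (Q b)) P -> sub_incl (J a) P.
  move=> al bl ab Ha Hb p /(HJ a al) Hp; apply: Hp; first exact: point_ideal.
  move=> q [Mq|Qq]; first by apply: Hb; apply: (HM a b).
  by apply: Ha; apply: gen_ideal_sub.
split.
- by case=> [A1 A2]; split; apply: span_self.
- case=> [S1 S2].
  have Hu : pt_incl (union_var J i) (union_var (fun i => gen_ideal (Q i)) i).
    move=> P' HP' [k Hk V]; exists k => //; apply: VJQ => //; lia.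
  have [[_ A1] [k Hk [_ A2]]] :=
    (HLJ i Hi P HP).2 (conj (span_mono (VJQ i il) S1) (span_mono Hu S2)).
  have kl : (k < l)%N by lia.
  have ki : i <> k by lia.
  split; first by split => //; apply: (back i k).
  by exists k => //; split => //; apply: (back k i) => //; apply: nesym.
Qed.

Definition Lf (K : fieldType) n (J : nat -> subS K n) i : subS K n :=
  fun p => linear_form p /\ J i p.
Definition Wf (K : fieldType) n (J : nat -> subS K n) m : subS K n :=
  fun p => linear_form p /\ forall k, (k < m)%N -> J k p.
Definition Uf (K : fieldType) n (J : nat -> subS K n) m : subS K n :=
  fun p => exists a b, Lf J m a /\ Wf J m b /\ p = a + b.

Lemma linf0 (K : fieldType) n : linear_form (0 : {mpoly K[n]}).
Proof. by rewrite -(lf0 K n); apply: lf_linear_form. Qed.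
Lemma linfD (K : fieldType) n (p q : {mpoly K[n]}) :
  linear_form p -> linear_form q -> linear_form (p + q).
Proof.
move=> /linear_formP [c ->] /linear_formP [d ->]; rewrite -lfD; exact: lf_linear_form.
Qed.
Lemma linfZ (K : fieldType) n (a : K) (p : {mpoly K[n]}) :
  linear_form p -> linear_form (a *: p).
Proof. move=> /linear_formP [c ->]; rewrite -lfZ; exact: lf_linear_form. Qed.

Lemma Lf_lin (K : fieldType) n (J : nat -> subS K n) i :
  is_ideal (J i) -> is_lin_subspace (Lf J i).
Proof.
move=> HI; split.
- by move=> p [].
- by split; [apply: linf0 | apply: id0].
- by move=> p q [? ?] [? ?]; split; [apply: linfD | apply: idD].
- by move=> c p [? ?]; split; [apply: linfZ | apply: idZ].
Qed.

Lemma Wf_lin (K : fieldType) n (J : nat -> subS K n) m :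
  (forall k, (k < m)%N -> is_ideal (J k)) -> is_lin_subspace (Wf J m).
Proof.
move=> HI; split.
- by move=> p [].
- by split; [apply: linf0 | move=> k km; apply: id0; apply: HI].
- move=> p q [? Hp] [? Hq]; split; first by apply: linfD.
  by move=> k km; apply: idD; [apply: HI | apply: Hp | apply: Hq].
- move=> c p [? Hp]; split; first by apply: linfZ.
  by move=> k km; apply: idZ; [apply: HI | apply: Hp].
Qed.

Lemma Uf_lin (K : fieldType) n (J : nat -> subS K n) m :
  is_ideal (J m) -> (forall k, (k < m)%N -> is_ideal (J k)) -> is_lin_subspace (Uf J m).
Proof.
move=> Hm HI; case: (Lf_lin Hm) => L1 L2 L3 L4; case: (Wf_lin HI) => W1 W2 W3 W4; split.
- by move=> p [a [b [La [Wb ->]]]]; apply: linfD; [apply: L1 | apply: W1].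
- by exists 0, 0; rewrite addr0.
- move=> p q [a [b [La [Wb ->]]]] [a' [b' [La' [Wb' ->]]]].
  exists (a + a'), (b + b'); split; [exact: L3 | split; [exact: W3|]].
  by rewrite addrACA.
- move=> c p [a [b [La [Wb ->]]]]; exists (c *: a), (c *: b).
  by split; [exact: L4 | split; [exact: W4 | rewrite scalerDr]].
Qed.

Lemma Uf_split (K : fieldType) n (J : nat -> subS K n) m p :
  gen_ideal (Uf J m) p ->
  exists a b, gen_ideal (Lf J m) a /\ gen_ideal (Wf J m) b /\ p = a + b.
Proof.
pose S q := exists a b, gen_ideal (Lf J m) a /\ gen_ideal (Wf J m) b /\ q = a + b.
have GL := gen_ideal_ideal (Lf J m); have GW := gen_ideal_ideal (Wf J m).
apply: (@gen_ideal_min _ _ _ S).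
- split.
  + by exists 0, 0; split; [apply: id0 | split; [apply: id0 | rewrite addr0]].
  + move=> p1 q1 [a [b [Ha [Hb ->]]]] [a' [b' [Ha' [Hb' ->]]]].
    exists (a + a'), (b + b'); split; [exact: (idD GL Ha Ha') | split; [exact: (idD GW Hb Hb')|]].
    by rewrite addrACA.
  + move=> c p1 [a [b [Ha [Hb ->]]]]; exists (c * a), (c * b).
    by split; [exact: (idM c GL Ha) | split; [exact: (idM c GW Hb) | rewrite mulrDr]].
- move=> q [a [b [La [Wb ->]]]]; exists a, b.
  by split; [apply: gen_ideal_sub | split; [apply: gen_ideal_sub|]].
Qed.

Lemma key (K : fieldType) n l (J : nat -> subS K n) :
  (forall i, (i < l)%N -> is_point (J i)) -> linearly_joined J l ->
  forall m, (0 < m < l)%N ->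
  sub_incl (J m) (gen_ideal (Uf J m)) /\
  exists2 k, (k < m)%N & sub_incl (J k) (gen_ideal (Uf J m)).
Proof.
move=> Hpt LJ m Hm.
have ml : (m < l)%N by case/andP: Hm.
have HI k : (k < l)%N -> is_ideal (J k) by move=> kl; apply: point_ideal; apply: Hpt.
have Ulin : is_lin_subspace (Uf J m).
  by apply: Uf_lin; [apply: HI | move=> k km; apply: HI; lia].
have WU p : Wf J m p -> Uf J m p.
  move=> Wp; exists 0, p; split; last by split; rewrite ?add0r.
  by split; [apply: linf0 | apply: id0; apply: HI].
have LU p : Lf J m p -> Uf J m p.
  move=> Lp; exists p, 0; split => //; split; last by rewrite addr0.
  by split; [apply: linf0 | move=> k km; apply: id0; apply: HI; lia].
case: (classic (relevant (gen_ideal (Uf J m)))) => [rel|nrel].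
- have Pt := lin_point Ulin rel.
  have RHS : pt_cap (Defs.span (variety (J m))) (Defs.span (union_var J m)) (gen_ideal (Uf J m)).
    split.
  + split => // Q [Qlin _ _ _] Hinc.
    have [_ sub] := Hinc (J m) (Hpt m ml) (conj (Hpt m ml) (fun p x => x)).
    split => //; apply: gen_ideal_mono => q Qq; apply: LU; split; first exact: Qlin.
    by apply: sub; apply: gen_ideal_sub.
  + split => // Q [Qlin _ _ _] Hinc.
    split => //; apply: gen_ideal_mono => q Qq; apply: WU; split; first exact: Qlin.
    move=> k km; have kl : (k < l)%N by lia.
    have [_ sub] := Hinc (J k) (Hpt k kl) (ex_intro2 _ _ k km (conj (Hpt k kl) (fun p x => x))).
    by apply: sub; apply: gen_ideal_sub.
  have [[_ A1] [k Hk [_ A2]]] := (LJ m Hm _ Pt).2 RHS.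
  by split => //; exists k.
- have allX : forall i, gen_ideal (Uf J m) 'X_i.
    by apply: NNPP => H; apply: nrel => H'; apply: H.
  have GI := gen_ideal_ideal (Uf J m).
  have inc k : (k < l)%N -> sub_incl (J k) (gen_ideal (Uf J m)).
    move=> kl; have [Hh [_ J1 _] _] := Hpt k kl.
    exact: hom_in_max.
  split; first exact: inc.
  by exists 0%N; [case/andP: Hm | apply: inc; lia].
Qed.

Lemma decomp (K : fieldType) n l (J : nat -> subS K n) :
  (forall i, (i < l)%N -> is_point (J i)) -> linearly_joined J l ->
  forall mm, (mm <= l)%N -> forall i, (i < mm)%N -> forall f, J i f ->
  exists a b, gen_ideal (Lf J i) a /\
    (J i b /\ forall j, (j < mm)%N -> j <> i -> gen_ideal (Lf J j) b) /\ f = a + b.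
Proof.
move=> Hpt LJ.
have HI k : (k < l)%N -> is_ideal (J k) by move=> kl; apply: point_ideal; apply: Hpt.
have LJsub k : (k < l)%N -> sub_incl (gen_ideal (Lf J k)) (J k).
  by move=> kl; apply: gen_ideal_min; [apply: HI | move=> p []].
have WL m j : (j < m)%N -> sub_incl (gen_ideal (Wf J m)) (gen_ideal (Lf J j)).
  by move=> jm; apply: gen_ideal_mono => p [? Hp]; split => //; apply: Hp.
elim=> [|mm IH] Hmm i Hi f Jf; first by [].
have il : (i < l)%N by lia.
have GLi := gen_ideal_ideal (Lf J i).
case: (eqVneq i mm) => [Eim|Nim].
- subst mm.
  case: (posnP i) => [i0|ipos].
    exists 0, f; split; first exact: id0.
    by split; [split => // j jl ji; lia | rewrite add0r].
  have [H1 _] := key Hpt LJ (m := i) (ltac:(lia)).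
  have [a [w [Ha [Hw E]]]] := Uf_split (H1 f Jf).
  exists a, w; split => //; split; last by [].
  split.
    have -> : w = f - a by rewrite E addrC addKr.
    by apply: idB => //; [apply: HI | apply: LJsub].
  move=> j jl ji; apply: (WL i) => //; lia.
- have imm : (i < mm)%N by lia.
  have [a [b [Ha [[Jb Hb] E]]]] := IH (ltac:(lia)) i imm f Jf.
  have [_ [k km Hk]] := key Hpt LJ (m := mm) (ltac:(lia)).
  have Ub : gen_ideal (Uf J mm) b.
    case: (eqVneq k i) => [e|ki]; first by apply: Hk; rewrite e.
    apply: Hk; apply: (LJsub k); first lia.
    by apply: Hb => //; apply/eqP.
  have [c [w [Hc [Hw E2]]]] := Uf_split Ub.
  have wi : gen_ideal (Lf J i) w by apply: (WL mm).
  exists (a + w), c; split; first exact: (idD GLi Ha wi).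
  split; last by rewrite E E2 -addrA (addrC c w).
  have Ec : c = b - w by rewrite E2 addrK.
  split.
    by rewrite Ec; apply: idB => //; [apply: HI | apply: LJsub].
  move=> j jm ji; case: (eqVneq j mm) => [->|jmm] //.
  rewrite Ec; apply: (idB (gen_ideal_ideal (Lf J j))).
    by apply: Hb => //; lia.
  by apply: (WL mm) Hw; lia.
Qed.

Lemma dir12 (K : fieldType) n l (J : nat -> subS K n) :
  (forall i, (i < l)%N -> is_point (J i)) -> linearly_joined J l ->
  exists (Q M : nat -> subS K n),
     [/\ (forall i, (i < l)%N -> is_lin_subspace (Q i) /\ is_ideal (M i)),
         (forall i, (i < l)%N -> sub_eq (J i) (gen_ideal2 (M i) (Q i))),
         linearly_joined (fun i => gen_ideal (Q i)) l &
         (forall i j, (i < l)%N -> (j < l)%N -> i <> j ->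
            sub_incl (M i) (gen_ideal (Q j)))].
Proof.
move=> Hpt LJ.
have HI k : (k < l)%N -> is_ideal (J k) by move=> kl; apply: point_ideal; apply: Hpt.
pose M i p := J i p /\ forall j, (j < l)%N -> j <> i -> gen_ideal (Lf J j) p.
exists (Lf J), M; split.
- move=> i il; split; first by apply: Lf_lin; apply: HI.
  have HJ := HI i il; split.
  + by split; [apply: id0 | move=> j _ _; apply: id0; apply: gen_ideal_ideal].
  + move=> p q [Jp Hp] [Jq Hq]; split; first exact: (idD HJ Jp Jq).
    by move=> j jl ji; apply: (idD (gen_ideal_ideal (Lf J j))); [apply: Hp | apply: Hq].
  + move=> a p [Jp Hp]; split; first exact: (idM a HJ Jp).
    by move=> j jl ji; apply: (idM a (gen_ideal_ideal (Lf J j))); apply: Hp.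
- move=> i il p; split.
  + move=> Jp; have [a [b [Ha [Mb ->]]]] := decomp Hpt LJ (leqnn l) il Jp.
    apply: (idD (gen_ideal_ideal _)).
      by apply: gen_ideal_mono Ha => q Lq; right.
    by apply: gen_ideal_sub; left.
  + apply: gen_ideal_min; first exact: HI.
    by move=> q [[Jq _]|[_ Jq]].
- move=> i Hi P HP; split.
  + by case=> [A1 A2]; split; apply: span_self.
  + case=> [S1 S2].
    have PI := point_ideal HP.
    have il : (i < l)%N by case/andP: Hi.
    have [_ Pi] := S1.2 (Lf J i) (Lf_lin (HI i il)) (fun _ _ x => x).
    have [_ Pw] : variety (gen_ideal (Wf J i)) P.
      apply: S2.2; first by apply: Wf_lin => k ki; apply: HI; lia.
      move=> P' HP' [k ki [pt sub]]; split => //.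
      apply: gen_ideal_min; first exact: point_ideal.
      move=> q [lq Hq]; apply: sub; apply: gen_ideal_sub; split => //; exact: Hq.
    have PU : sub_incl (gen_ideal (Uf J i)) P.
      apply: gen_ideal_min => // q [a [b [La [Wb ->]]]].
      by apply: (idD PI); [apply: Pi | apply: Pw]; apply: gen_ideal_sub.
    have [_ [k ki Hk]] := key Hpt LJ Hi.
    split; first by split.
    exists k => //; split => //.
    apply: gen_ideal_min => // q [_ Jq]; exact: PU (Hk q Jq).
- by move=> i j il jl ij p [_ Hp]; apply: Hp => //; apply: nesym.
Qed.

Theorem mainTheorem2 (K : fieldType) (r l : nat)
    (J : nat -> {mpoly K[r.+1]} -> Prop) :
  (forall i, (i < l)%N ->
     is_homogeneous_ideal (J i) /\ is_prime_ideal (J i) /\ relevant (J i)) ->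
  (linearly_joined J l <->
   exists (Q M : nat -> {mpoly K[r.+1]} -> Prop),
     [/\ (forall i, (i < l)%N -> is_lin_subspace (Q i) /\ is_ideal (M i)),
         (forall i, (i < l)%N -> sub_eq (J i) (gen_ideal2 (M i) (Q i))),
         linearly_joined (fun i => gen_ideal (Q i)) l &
         (forall i j, (i < l)%N -> (j < l)%N -> i <> j ->
            sub_incl (M i) (gen_ideal (Q j)))]).
Proof.
move=> H.
have Hpt : forall i, (i < l)%N -> is_point (J i).
  by move=> i il; have [? [? ?]] := H i il; split.
split; first exact: dir12.
by case=> Q [M [HQM HJ HLJ HM]]; apply: (dir21 HQM HJ HLJ HM).
Qed.
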